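(* Proportional approval voting (PAV) is the only Thiele rule (for the fixed $m$ and $k$) that satisfies party-proportionality.
   Context: Let $\mathcal C=\{c_1,\dots,c_m\}$ ($m\ge2$) be the candidates, $\mathcal A$ the set of non-empty subsets of $\mathcal C$ (ballots), and a profile a map $A:N_A\to\mathcal A$ from a non-empty finite set of voters $N_A\subseteq\mathbb N$. Fix $k\in\{1,\dots,m-1\}$, and let $\mathcal W_k$ be the set of $k$-element subsets of $\mathcal C$ (committees). An ABC voting rule maps each profile to a non-empty subset of $\mathcal W_k$. A Thiele rule is an ABC voting rule for which there is a non-decreasing $s:\{0,\dots,k\}\to\mathbb R$ with $s(0)=0$ such that $f(A)$ is the set of committees $W$ maximizing $\sum_{i\in N_A}s(|A_i\cap W|)$. PAV is the Thiele rule with $s(x)=\sum_{z=1}^x\frac1z$. A profile $A$ is a party-list profile if there is a partition $\mathcal P_A=\{P_1,\dots,P_\ell\}$ of $\mathcal C$ such that every voter's ballot equals some $P_j$; $n_j$ denotes the number of voters whose ballot is $P_j$. An ABC voting rule $f$ is party-proportional if for all party-list profiles $A$, all $W\in f(A)$, and all parties $P_i,P_j\in\mathcal P_A$ with $n_i/|P_i|<n_j/|P_j|$, $P_i\subseteq W$ implies $P_j\subseteq W$. *)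

(* Defs.v *)
From HB Require Import structures.
From mathcomp Require Import all_boot all_order all_algebra.
From mathcomp Require Import finmap.
From mathcomp Require Import reals.
Set Implicit Arguments. Unset Strict Implicit. Unset Printing Implicit Defensive.
Import Order.TTheory GRing.Theory Num.Theory.
Local Open Scope ring_scope.
Local Open Scope fset_scope.

(* Candidates are 'I_m; ballots are (non-empty) sets of candidates.
   A profile is a finite partial map from voter names (nat) to ballots;
   its domain is the set of voters N_A. *)
Definition profile (m : nat) := {fmap nat -> {set 'I_m}}.

Definition valid_profile (m : nat) (A : profile m) : Prop :=
  domf A != fset0 /\ forall i : domf A, A i != set0.

Definition abc_rule (m : nat) := profile m -> {set {set 'I_m}}.

Definition is_abc_rule (m k : nat) (f : abc_rule m) : Prop :=
  forall A : profile m, valid_profile A ->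
    f A != set0 /\ forall W, W \in f A -> #|W| = k.

Definition thiele_score (R : realType) (m : nat) (s : nat -> R)
    (A : profile m) (W : {set 'I_m}) : R :=
  \sum_(i : domf A) s #|A i :&: W|.

Definition thiele_rule (R : realType) (m k : nat) (s : nat -> R)
    (A : profile m) : {set {set 'I_m}} :=
  [set W : {set 'I_m} | (#|W| == k) &&
     [forall W' : {set 'I_m}, (#|W'| == k) ==>
        (thiele_score s A W' <= thiele_score s A W)]].

(* Admissible Thiele scoring function on {0,...,k}: s(0)=0, nondecreasing.
   (Values of s beyond k are never used since |A_i ∩ W| <= |W| = k.) *)
Definition thiele_score_fun (R : realType) (k : nat) (s : nat -> R) : Prop :=
  s 0%N = 0 /\ forall x y : nat, (x <= y)%N -> (y <= k)%N -> s x <= s y.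

Definition is_thiele_rule (R : realType) (m k : nat) (f : abc_rule m) : Prop :=
  exists s : nat -> R, thiele_score_fun k s /\
    forall A : profile m, valid_profile A -> f A = thiele_rule k s A.

Definition pav_score (R : realType) (x : nat) : R :=
  \sum_(1 <= z < x.+1) (z%:R)^-1.

Definition PAV (R : realType) (m k : nat) : abc_rule m :=
  thiele_rule k (@pav_score R).

Definition party_list_for (m : nat) (A : profile m) (P : {set {set 'I_m}}) : Prop :=
  partition P [set: 'I_m] /\ forall i : domf A, A i \in P.

Definition party_support (m : nat) (A : profile m) (Q : {set 'I_m}) : nat :=
  #|[set i : domf A | A i == Q]|.

Definition party_proportional (R : realType) (m : nat) (f : abc_rule m) : Prop :=
  forall (A : profile m) (P : {set {set 'I_m}}),
    valid_profile A -> party_list_for A P ->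
    forall W, W \in f A ->
    forall Pi Pj, Pi \in P -> Pj \in P ->
      ((party_support A Pi)%:R / (#|Pi|)%:R : R)
        < (party_support A Pj)%:R / (#|Pj|)%:R ->
      Pi \subset W -> Pj \subset W.

Arguments valid_profile m A : clear implicits.
Arguments is_abc_rule m k f : clear implicits.
Arguments thiele_score R m s A W : clear implicits.
Arguments thiele_rule R m k s A : clear implicits.
Arguments thiele_score_fun R k s : clear implicits.
Arguments is_thiele_rule R m k f : clear implicits.
Arguments pav_score R x : clear implicits.
Arguments PAV R m k A : clear implicits.
Arguments party_proportional R m f : clear implicits.

(* Main.v *)
Require Import Defs.
From HB Require Import structures.
From mathcomp Require Import all_boot all_order all_algebra.
From mathcomp Require Import finmap.
From mathcomp Require Import reals.
Set Implicit Arguments. Unset Strict Implicit. Unset Printing Implicit Defensive.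
Import Order.TTheory GRing.Theory Num.Theory.
Local Open Scope ring_scope.

Definition vlist (m : nat) (w : 'I_m -> nat) : seq nat :=
  allpairs_dep (fun c r => choice.pickle (c, r)) (enum 'I_m) (fun c => iota 0 (w c)).

Definition mkprof (m : nat) (w : 'I_m -> nat) (blk : 'I_m -> {set 'I_m}) : profile m :=
  [fmap v : seq_fset tt (vlist w) =>
     match @choice.unpickle ('I_m * nat)%type (val v) with Some p => blk p.1 | None => set0 end].

Lemma vlist_uniq m (w : 'I_m -> nat) : uniq (vlist w).
Proof.
rewrite /vlist.
have -> : allpairs_dep (fun c r => choice.pickle (c, r)) (enum 'I_m) (fun c => iota 0 (w c)) =
   map choice.pickle (allpairs_dep (fun (c : 'I_m) (r : nat) => (c, r)) (enum 'I_m) (fun c => iota 0 (w c))).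
  by rewrite map_allpairs.
rewrite (map_inj_uniq (pcan_inj choice.pickleK)).
apply: allpairs_uniq_dep => //; first exact: enum_uniq.
  by move=> c _; exact: iota_uniq.
by move=> [c1 r1] [c2 r2] /= _ _ [-> ->].
Qed.

Lemma mkprof_sum (V : nmodType) m (w : 'I_m -> nat) blk (g : {set 'I_m} -> V) :
  \sum_(i : domf (mkprof w blk)) g (mkprof w blk i) = \sum_(c : 'I_m) g (blk c) *+ w c.
Proof.
rewrite /mkprof /=.
under eq_bigr => i _ do rewrite ffunE.
rewrite -(big_seq_fsetE _ _ predT (fun v => g (match @choice.unpickle ('I_m * nat)%type v with Some p => blk p.1 | None => set0 end))).
rewrite (perm_big (undup (vlist w))) /=; last first.
  exact: (seq_fset_perm tt (vlist w)).
rewrite undup_id ?vlist_uniq //.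
rewrite /vlist big_allpairs_dep /= -big_enum /=.
apply: eq_bigr => c _.
under eq_bigr => r _ do rewrite choice.pickleK /=.
by rewrite big_const_seq count_predT size_iota iter_addr_0.
Qed.

Lemma mkprof_mem m (w : 'I_m -> nat) blk (i : domf (mkprof w blk)) :
  exists c, mkprof w blk i = blk c.
Proof.
rewrite /mkprof /= ffunE.
have : val i \in vlist w.
  by rewrite -(seq_fsetE tt); exact: (valP i).
case/allpairsPdep => c [r [_ _ ->]].
by exists c; rewrite choice.pickleK.
Qed.

Lemma mkprof_dom m (w : 'I_m -> nat) blk c : (0 < w c)%N ->
  domf (mkprof w blk) != fset0.
Proof.
move=> hw; apply/fset0Pn; exists (choice.pickle (c, 0%N)).
have -> : domf (mkprof w blk) = seq_fset tt (vlist w) by []. rewrite seq_fsetE; apply/allpairsPdep; exists c, 0%N.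
by rewrite mem_enum mem_iota hw.
Qed.

Lemma mkprof_support m (w : 'I_m -> nat) blk B :
  party_support (mkprof w blk) B = (\sum_(c : 'I_m) (blk c == B) * w c)%N.
Proof.
rewrite /party_support cardsE -sum1_card big_mkcond /=.
have := @mkprof_sum nat m w blk (fun B' => nat_of_bool (B' == B)).
rewrite /= => ->.
(apply: eq_bigr => c _); rewrite mulnC; elim: (w c) => // n IH; by rewrite mulrS mulSn IH.
Qed.

Lemma card_int m lo hi : (hi <= m)%N ->
  #|[set c : 'I_m | (lo <= c < hi)%N]| = (hi - lo)%N.
Proof.
move=> hm; rewrite cardsE -sum1_card big_mkcond /=.
rewrite -(big_mkord xpredT (fun i => if (lo <= i < hi)%N then 1%N else 0%N)).
case: (leqP lo hi) => hlh; last first.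
  rewrite big1 //; last by move=> i _; case: ifP => //; case/andP => /leq_ltn_trans h /h; rewrite ltnNge ltnW.
  by apply/esym/eqP; rewrite subn_eq0 ltnW.
rewrite (@big_cat_nat _ _ _ lo) //=; last exact: leq_trans hlh hm.
rewrite (@big_cat_nat _ _ _ hi lo) //=.
rewrite big1_seq; last by move=> i; rewrite mem_index_iota /= => hj; rewrite leqNgt hj.
rewrite [X in (_ + (_ + X))%N]big1_seq; last by move=> i; rewrite mem_index_iota /= => /andP [hj _]; rewrite ltnNge hj andbF.
rewrite big_seq_cond (eq_bigr (fun _ => 1%N)); last by move=> i; rewrite mem_index_iota andbT => ->.
by rewrite -big_seq_cond sum1_size size_iota add0n addn0.
Qed.

Lemma card_lt m x : (x <= m)%N -> #|[set c : 'I_m | (c < x)%N]| = x.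
Proof.
move=> hxm; transitivity #|[set c : 'I_m | (0 <= c < x)%N]|.
  by congr #|_|; apply/setP => c; rewrite !inE.
by rewrite card_int // subn0.
Qed.

Definition fk m x (c : 'I_m) : nat := if (c < x)%N then 0%N else c.+1.
Definition blk m x (c : 'I_m) : {set 'I_m} := [set y in [set: 'I_m] | fk x c == fk x y].
Definition P1 m x : {set 'I_m} := [set c : 'I_m | (0 <= c < x)%N].
Definition wt m x k q1 q (c : 'I_m) : nat :=
  if (c < x)%N then q1 else if (c <= k)%N then q else 0%N.
Definition prof m x k q1 q : profile m := mkprof (@wt m x k q1 q) (blk x).
Definition parts m x : {set {set 'I_m}} := preim_partition (@fk m x) [set: 'I_m].

Lemma blk_lt m x (c : 'I_m) : (c < x)%N -> blk x c = P1 m x.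
Proof.
move=> hc; apply/setP => y; rewrite !inE /fk hc /=.
by case: ifP => //.
Qed.

Lemma blk_ge m x (c : 'I_m) : ~~ (c < x)%N -> blk x c = [set c].
Proof.
move=> hc; apply/setP => y; rewrite !inE /fk (negbTE hc) /=.
case: ifP => hy; first by apply/esym/eqP => hyc; move: hc; rewrite -hyc hy.
by rewrite eqSS eq_sym.
Qed.

Lemma blk_in m x (c : 'I_m) : c \in blk x c.
Proof. by rewrite /blk inE in_setT eqxx. Qed.

Lemma parts_ok m x k q1 q : party_list_for (prof m x k q1 q) (parts m x).
Proof.
split; first exact: preim_partitionP.
move=> i; have [c ->] := mkprof_mem i.
rewrite /parts /preim_partition /equivalence_partition; apply/imsetP; exists c; rewrite ?inE //.
Qed.

Lemma prof_valid m x k q1 q (c : 'I_m) : (c < x)%N -> (0 < q1)%N ->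
  valid_profile m (prof m x k q1 q).
Proof.
move=> hc hq; split.
  by apply: (@mkprof_dom _ _ _ c); rewrite /wt hc.
move=> i; have [c' ->] := mkprof_mem i.
by apply/set0Pn; exists c'; exact: blk_in.
Qed.

Lemma sum_bool_card m (P : pred 'I_m) :
  (\sum_(c : 'I_m) nat_of_bool (P c))%N = #|[set c | P c]|.
Proof.
rewrite cardsE -sum1_card [RHS]big_mkcond; apply: eq_bigr => c _.
by rewrite unfold_in; case: (P c).
Qed.

Lemma sum_const_card (V : nmodType) m (P : pred 'I_m) (a : V) :
  \sum_(c | P c) a = a *+ #|[set c | P c]|.
Proof. by rewrite sumr_const cardsE. Qed.

Lemma prof_supp_P1 m x k q1 q : (x <= m)%N ->
  party_support (prof m x k q1 q) (P1 m x) = (x * q1)%N.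
Proof.
move=> hxm; rewrite mkprof_support.
rewrite (eq_bigr (fun c : 'I_m => (nat_of_bool (c < x)%N) * q1)%N); last first.
  move=> c _; case: (ltnP c x) => hc.
    by rewrite blk_lt // eqxx /wt hc.
  rewrite blk_ge -?leqNgt //; case: eqP => //= hE.
  by move: (set11 c); rewrite hE inE /= ltnNge hc.
rewrite -big_distrl /= sum_bool_card.
by rewrite card_lt.
Qed.

Lemma prof_supp_T m x k q1 q (t : 'I_m) : (x <= t)%N -> (t <= k)%N ->
  party_support (prof m x k q1 q) [set t] = q.
Proof.
move=> hxt htk; rewrite mkprof_support (bigD1 t) //= blk_ge -?leqNgt // eqxx.
rewrite /wt ltnNge hxt /= htk mul1n big1 ?addn0 //.
move=> c hct; case: (ltnP c x) => hc.
  rewrite blk_lt //; case: eqP => //= hE.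
  by move: (set11 t); rewrite -hE inE /= ltnNge hxt.
rewrite blk_ge -?leqNgt //; case: eqP => //= /setP /(_ c).
by rewrite !inE eqxx => /esym/eqP hE; move: hct; rewrite hE eqxx.
Qed.

Definition Tset m x k : {set 'I_m} := [set c : 'I_m | (x <= c < k.+1)%N].

Lemma prof_score (R : realType) m x k q1 q (s : nat -> R) W : s 0%N = 0 -> (x <= m)%N ->
  thiele_score R m s (prof m x k q1 q) W =
    s #|P1 m x :&: W| *+ (x * q1) + s 1%N *+ (q * #|Tset m x k :&: W|).
Proof.
move=> hs0 hxm; rewrite /thiele_score.
rewrite (@mkprof_sum R m (wt x k q1 q) (blk x) (fun B => s #|B :&: W|)).
rewrite (bigID (fun c : 'I_m => (c < x)%N)) /=.
congr (_ + _).
  rewrite (eq_bigr (fun _ => s #|P1 m x :&: W| *+ q1)); last first.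
    by move=> c hc; rewrite blk_lt // /wt hc.
  rewrite sum_const_card -mulrnA mulnC.
  by rewrite card_lt.
rewrite (eq_bigr (fun c : 'I_m => (s 1%N *+ q) *+ nat_of_bool ((c <= k)%N && (c \in W)))); last first.
  move=> c hc; rewrite blk_ge // /wt (negbTE hc).
  case: (c <= k)%N; last by rewrite mulr0n.
  case: (boolP (c \in W)) => hcW /=.
    have -> : [set c] :&: W = [set c] by apply/setP => y; rewrite !inE; case: eqP => [->|] //; rewrite hcW.
    by rewrite cards1 mulr1n.
  have -> : [set c] :&: W = set0 by apply/setP => y; rewrite !inE; case: eqP => [->|] //; rewrite (negbTE hcW).
  by rewrite cards0 hs0 mul0rn mulr0n.
rewrite sumrMnr -mulrnA; congr (_ *+ (_ * _))%N.
rewrite big_mkcond /= (eq_bigr (fun i : 'I_m => nat_of_bool ((~~ (i < x)%N) && ((i <= k)%N && (i \in W))))); last by move=> i _; case: ifP.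
rewrite sum_bool_card /Tset; apply: eq_card => i; rewrite !inE -leqNgt ltnS.
by rewrite andbA.
Qed.

Lemma card_T m x k : (x <= k)%N -> (k < m)%N -> #|Tset m x k| = (k.+1 - x)%N.
Proof. by move=> hxk hkm; rewrite card_int. Qed.

Lemma ab_facts m x k (W : {set 'I_m}) : (x <= k)%N -> (k < m)%N -> #|W| = k ->
  [/\ (#|P1 m x :&: W| <= x)%N, (#|Tset m x k :&: W| <= k.+1 - x)%N &
      (#|P1 m x :&: W| + #|Tset m x k :&: W| <= k)%N].
Proof.
move=> hxk hkm hW; split.
- apply: leq_trans (subset_leq_card (subsetIl _ _)) _.
  by rewrite /P1 card_int ?subn0 //; apply: leq_trans (ltnW hkm).
- by rewrite -(@card_T m) //; apply: subset_leq_card; apply: subsetIl.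
- rewrite -cardsUI.
  have -> : (P1 m x :&: W) :&: (Tset m x k :&: W) = set0.
    apply/setP => c; rewrite !inE; case: (ltnP c x) => //= hc.
    by rewrite andbF.
  rewrite cards0 addn0 -hW; apply: subset_leq_card.
  by apply/subsetP => c; rewrite !inE => /orP [] /andP [].
Qed.

From mathcomp Require Import lra ring zify.

Lemma prof_scoreR (R : realType) m x k q1 q (s : nat -> R) W : s 0%N = 0 -> (x <= m)%N ->
  thiele_score R m s (prof m x k q1 q) W =
    (x * q1)%:R * s #|P1 m x :&: W| + q%:R * s 1%N * (#|Tset m x k :&: W|)%:R.
Proof.
move=> h0 hx; rewrite prof_score //.
by congr (_ + _); rewrite -mulr_natl ?natrM; ring.
Qed.

Lemma key (R : realType) m k (s : nat -> R) (f : abc_rule m)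
  (hs : thiele_score_fun R k s)
  (hf : forall A, valid_profile m A -> f A = thiele_rule R m k s A)
  (hp : party_proportional R m f) (hkm : (k < m)%N) x q1 q
  (hx1 : (0 < x)%N) (hxk : (x <= k)%N) (hq1 : (0 < q1)%N) :
  ((q1 < q)%N -> q%:R * s 1%N <= (x * q1)%:R * (s x - s x.-1) -> False) /\
  ((q < q1)%N -> (x * q1)%:R * (s x - s x.-1) <= q%:R * s 1%N -> False).
Proof.
case: hs => h0 hmono.
have hxm : (x <= m)%N by apply: leq_trans (ltnW hkm).
pose A := prof m x k q1 q.
have c0lt : (0 < m)%N by apply: leq_ltn_trans hkm.
pose c0 : 'I_m := Ordinal c0lt.
pose ck : 'I_m := Ordinal hkm.
have hval : valid_profile m A by apply: (@prof_valid m x k q1 q c0).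
have hpl : party_list_for A (parts m x) := parts_ok m x k q1 q.
have hP1 : P1 m x \in parts m x.
  rewrite -(@blk_lt m x c0) //.
  rewrite /parts /preim_partition /equivalence_partition; apply/imsetP; exists c0; rewrite ?inE //.
have hT : [set ck] \in parts m x.
  rewrite -(@blk_ge m x ck) /= -?leqNgt //.
  rewrite /parts /preim_partition /equivalence_partition; apply/imsetP; exists ck; rewrite ?inE //.
have rP1 : (party_support A (P1 m x))%:R / (#|P1 m x|)%:R = q1%:R :> R.
  rewrite prof_supp_P1 // /P1 card_int // subn0 natrM mulrC mulKf //.
  by rewrite pnatr_eq0 -lt0n.
have rT : (party_support A [set ck])%:R / (#|[set ck]|)%:R = q%:R :> R.
  by rewrite prof_supp_T //= cards1 divr1.
have hs1 : 0 <= s 1%N by have := hmono 0%N 1%N isT (leq_trans hx1 hxk); rewrite h0.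
have hN : 0 <= (x * q1)%:R :> R by [].
have hQ : 0 <= q%:R * s 1%N :> R by rewrite mulr_ge0.
have hxp : (x.-1 <= k)%N by apply: leq_trans (leq_pred x) hxk.
have hkx : ((k.+1 - x)%:R = (k - x)%:R + 1 :> R)%R by rewrite subSn // mulrSr.
split => hq hineq.
- pose W0 := [set c : 'I_m | (c < k)%N].
  have hW0 : W0 \in f A.
    rewrite hf // inE; apply/andP; split; first by rewrite card_lt // ltnW.
    apply/forallP => W'; apply/implyP => /eqP hW'.
    rewrite !prof_scoreR //.
    have -> : P1 m x :&: W0 = P1 m x.
      by apply/setP => c; rewrite !inE /=; case hc: (c < x)%N => //=; apply: leq_trans hc hxk.
    have -> : Tset m x k :&: W0 = [set c : 'I_m | (x <= c < k)%N].
      apply/setP => c; rewrite !inE; case: (x <= c)%N => //=.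
      by case hc: (c < k)%N; rewrite ?andbT ?andbF //= ltnS ltnW.
    rewrite (@card_int m x k (ltnW hkm)) /P1 (@card_int m 0 x hxm) subn0.
    have [ha hb hab] := ab_facts hxk hkm hW'.
    move: ha hb hab; set a := #|P1 m x :&: W'|; set b := #|Tset m x k :&: W'| => ha hb hab.
    case: (ltnP a x) => hax.
      have h1 : (x * q1)%:R * s a <= (x * q1)%:R * s x.-1 :> R.
        apply: ler_wpM2l => //; apply: hmono => //.
        by rewrite -ltnS prednK.
      have h2 : q%:R * s 1%N * b%:R <= q%:R * s 1%N * ((k - x)%:R + 1) :> R.
        by apply: ler_wpM2l => //; rewrite -hkx ler_nat.
      lra.
    have hax' : a = x by apply/anti_leq; rewrite ha hax.
    have h2 : q%:R * s 1%N * b%:R <= q%:R * s 1%N * (k - x)%:R :> R.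
      apply: ler_wpM2l => //; rewrite ler_nat leq_subRL //; first by rewrite -hax'.
    rewrite hax'; lra.
  have := hp A (parts m x) hval hpl W0 hW0 (P1 m x) [set ck] hP1 hT.
  rewrite rP1 rT ltr_nat hq => /(_ isT).
  have -> : (P1 m x \subset W0) = true.
    by apply/subsetP => c; rewrite !inE /= => hc; apply: leq_trans hc hxk.
  move=> /(_ isT) /subsetP /(_ ck); rewrite !inE eqxx /= ltnn.
  by move=> /(_ isT).
- pose W0 := [set c : 'I_m | (1 <= c < k.+1)%N].
  have hW0 : W0 \in f A.
    rewrite hf // inE; apply/andP; split; first by rewrite card_int // subn1.
    apply/forallP => W'; apply/implyP => /eqP hW'.
    rewrite !prof_scoreR //.
    have -> : P1 m x :&: W0 = [set c : 'I_m | (1 <= c < x)%N].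
      apply/setP => c; rewrite !inE /=; case hc: (c < x)%N; rewrite ?andbF ?andbT //=.
      by rewrite (leq_trans hc (leq_trans hxk (leqnSn k))) andbT.
    have -> : Tset m x k :&: W0 = Tset m x k.
      apply/setP => c; rewrite !inE; case hc: (x <= c)%N; rewrite //=.
      by rewrite (leq_trans hx1 hc); case: (c < k.+1)%N.
    rewrite (@card_int m 1 x hxm) subn1 card_T //.
    have [ha hb hab] := ab_facts hxk hkm hW'.
    move: ha hb hab; set a := #|P1 m x :&: W'|; set b := #|Tset m x k :&: W'| => ha hb hab.
    case: (ltnP a x) => hax.
      have h1 : (x * q1)%:R * s a <= (x * q1)%:R * s x.-1 :> R.
        apply: ler_wpM2l => //; apply: hmono => //.
        by rewrite -ltnS prednK.
      have h2 : q%:R * s 1%N * b%:R <= q%:R * s 1%N * (k.+1 - x)%:R :> R.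
        by apply: ler_wpM2l => //; rewrite ler_nat.
      lra.
    have hax' : a = x by apply/anti_leq; rewrite ha hax.
    have h2 : q%:R * s 1%N * b%:R <= q%:R * s 1%N * (k - x)%:R :> R.
      apply: ler_wpM2l => //; rewrite ler_nat leq_subRL //; first by rewrite -hax'.
    rewrite hax' hkx; lra.
  have := hp A (parts m x) hval hpl W0 hW0 [set ck] (P1 m x) hT hP1.
  rewrite rP1 rT ltr_nat hq => /(_ isT).
  have -> : ([set ck] \subset W0) = true.
    by apply/subsetP => c; rewrite !inE /= => /eqP ->; rewrite /= ltnS leqnn andbT (leq_trans hx1 hxk).
  move=> /(_ isT) /subsetP /(_ c0); rewrite !inE /= hx1.
  by move=> /(_ isT).
Qed.

Lemma pav0 (R : realType) : pav_score R 0 = 0.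
Proof. by rewrite /pav_score big_geq. Qed.

Lemma pavS (R : realType) n : pav_score R n.+1 = pav_score R n + (n.+1)%:R^-1.
Proof. by rewrite /pav_score big_nat_recr. Qed.

Lemma pav_mono (R : realType) a b : (a <= b)%N -> pav_score R a <= pav_score R b.
Proof.
move=> /subnK <-; elim: (b - a)%N => [|n IH]; first by rewrite add0n.
rewrite addSn pavS; apply: le_trans IH _; rewrite lerDl invr_ge0 //.
Qed.

Lemma card_swap (T : finType) (B W : {set T}) c d : c \in W -> d \notin W ->
  (#|B :&: (d |: (W :\ c))| + (c \in B) = #|B :&: W| + (d \in B))%N.
Proof.
move=> hc hd.
have hdX : d \notin (B :&: W) :\ c by rewrite !inE (negbTE hd) !andbF.
have hcX : (c \in B :&: W) = (c \in B) by rewrite inE hc andbT.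
rewrite [in RHS](cardsD1 c (B :&: W)) hcX.
case: (boolP (d \in B)) => hdB.
  have -> : B :&: (d |: (W :\ c)) = d |: ((B :&: W) :\ c).
    apply/setP => y; rewrite !inE; case: eqP => [->|] //=; first by rewrite hdB.
    by move=> _; rewrite andbCA.
  rewrite cardsU1 hdX /=; set b := nat_of_bool (c \in B); set n := #|_|; lia.
have -> : B :&: (d |: (W :\ c)) = (B :&: W) :\ c.
  apply/setP => y; rewrite !inE; case: eqP => [->|] //=; first by rewrite (negbTE hdB) (negbTE hd) !andbF.
  by move=> _; rewrite andbCA.
by rewrite addnC addn0.
Qed.

Lemma card_setT_sum (T : finType) (P : pred T) (R : realType) :
  (#|[set i | P i]|)%:R = \sum_(i : T) (nat_of_bool (P i))%:R :> R.
Proof.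
rewrite cardsE -sum1_card natr_sum big_mkcond; apply: eq_bigr => i _.
by rewrite unfold_in; case: (P i).
Qed.

Lemma pavD (R : realType) n : (0 < n)%N -> pav_score R n - pav_score R n.-1 = (n%:R)^-1.
Proof. by case: n => // n _; rewrite pavS /= addrC addKr. Qed.

Lemma pav_pp (R : realType) m k : party_proportional R m (PAV R m k).
Proof.
move=> A P hv [hpart hball] W hW Pi Pj hPi hPj hr hsub.
apply/subsetP => d hdPj; apply/negPn/negP => hdW.
move: hW; rewrite /PAV /thiele_rule inE => /andP [/eqP hWk /forallP hmax].
move: hpart => /and3P [_ htriv hnz].
have [c hcPi] : exists c, c \in Pi.
  by apply/set0Pn; apply: contraNneq hnz => <-.
have hcW : c \in W by apply: (subsetP hsub).
have hneq : Pi != Pj.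
  by apply: contraTneq hr => ->; rewrite ltxx.
have hdisj := trivIsetP htriv Pi Pj hPi hPj hneq.
have hdPi : d \notin Pi by rewrite (disjointFl hdisj hdPj).
have hcPj : c \notin Pj by rewrite (disjointFr hdisj hcPi).
pose W' := d |: (W :\ c).
have hW'k : #|W'| == k.
  rewrite cardsU1 !inE (negbTE hdW) andbF /=.
  by rewrite -hWk (cardsD1 c W) hcW add1n.
have := hmax W'; rewrite hW'k /= => hle.
have hpos : forall Q, Q \in P -> (0 < #|Q|)%N.
  by move=> Q hQ; rewrite card_gt0; apply: contraNneq hnz => <-.
pose g (B : {set 'I_m}) : R := (B == Pi)%:R * - (#|Pi|%:R)^-1 + (B == Pj)%:R * (#|Pj|%:R)^-1.
have hg : forall i : domf A, g (A i) <= pav_score R #|A i :&: W'| - pav_score R #|A i :&: W|.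
  move=> i; have hB := hball i; have hsw := card_swap (A i) hcW hdW.
  rewrite /g; case: (eqVneq (A i) Pi) => [hEi|hNi].
    rewrite hEi (negbTE hneq) mul0r addr0 mul1r; rewrite hEi hcPi (negbTE hdPi) in hsw.
    have hPW : Pi :&: W = Pi by apply/setIidPl.
    rewrite hPW; rewrite hPW in hsw.
    move: hsw; rewrite addn1 addn0 => <-; by rewrite pavS opprD addrA subrr add0r.
  rewrite mul0r add0r; case: (eqVneq (A i) Pj) => [hEj|hNj].
    rewrite hEj mul1r; rewrite hEj (negbTE hcPj) hdPj addn0 addn1 in hsw.
    have hu : (0 < #|Pj :&: W'|)%N by rewrite hsw.
    have -> : #|Pj :&: W| = (#|Pj :&: W'|).-1 by rewrite hsw.
    have hPj0 := hpos Pj hPj; rewrite pavD // lef_pV2 ?posrE ?ltr0n ?hPj0 ?hu // ler_nat.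
    by apply: subset_leq_card; apply: subsetIl.
  rewrite mul0r subr_ge0.
  have hd1 := trivIsetP htriv (A i) Pi hB hPi hNi.
  have hd2 := trivIsetP htriv (A i) Pj hB hPj hNj.
  rewrite (disjointFl hd1 hcPi) (disjointFl hd2 hdPj) !addn0 in hsw.
  by rewrite hsw.
have hsum : \sum_(i : domf A) g (A i) <= thiele_score R m (pav_score R) A W' - thiele_score R m (pav_score R) A W.
  by rewrite /thiele_score -sumrB; apply: ler_sum => i _; apply: hg.
have hgs : \sum_(i : domf A) g (A i) =
   (party_support A Pj)%:R / (#|Pj|)%:R - (party_support A Pi)%:R / (#|Pi|)%:R.
  rewrite /g big_split /= -!mulr_suml /party_support !card_setT_sum.
  by rewrite mulrN addrC.
move: hsum; rewrite hgs => hsum.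
have : 0 < thiele_score R m (pav_score R) A W' - thiele_score R m (pav_score R) A W.
  apply: lt_le_trans hsum; by rewrite subr_gt0.
by rewrite subr_gt0 ltNge hle.
Qed.

Lemma archi_ex (R : realType) (a e : R) : 0 < e ->
  exists n : nat, forall j, (n <= j)%N -> a <= j%:R * e.
Proof.
move=> he; exists (Num.Def.archi_bound (`|a| / e)) => j hj.
have h1 := archi_boundP (divr_ge0 (normr_ge0 a) (ltW he)).
apply: le_trans (ler_norm a) _.
have : `|a| / e <= j%:R by apply: le_trans (ltW h1) _; rewrite ler_nat.
by rewrite ler_pdivrMr.
Qed.

Lemma thiele_scale (R : realType) m k (s t : nat -> R) (c : R) (A : profile m) :
  0 < c -> (forall j, (j <= k)%N -> s j = c * t j) ->
  thiele_rule R m k s A = thiele_rule R m k t A.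
Proof.
move=> hc hst.
have hsc : forall W : {set 'I_m}, #|W| = k -> thiele_score R m s A W = c * thiele_score R m t A W.
  move=> W hW; rewrite /thiele_score mulr_sumr; apply: eq_bigr => i _; apply: hst.
  by rewrite -hW; apply: subset_leq_card; apply: subsetIr.
apply/setP => W; rewrite !inE; case hW: (#|W| == k) => //=.
apply: eq_forallb => W'; case hW': (#|W'| == k) => //=.
by rewrite !hsc ?(eqP hW) ?(eqP hW') // ler_pM2l.
Qed.

Lemma s_pav (R : realType) m k (s : nat -> R) (f : abc_rule m)
  (hs : thiele_score_fun R k s)
  (hf : forall A, valid_profile m A -> f A = thiele_rule R m k s A)
  (hp : party_proportional R m f) (hkm : (k < m)%N) (hk1 : (1 <= k)%N) :
  0 < s 1%N /\ forall j, (j <= k)%N -> s j = s 1%N * pav_score R j.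
Proof.
have hs' := hs; case: hs' => h0 hmono.
have hkey := key hs hf hp hkm.
have hs1 : 0 < s 1%N.
  rewrite ltNge; apply/negP => hle.
  have [H1 _] := hkey 1%N 1%N 2%N isT hk1 isT.
  apply: H1 => //=; rewrite h0 subr0 mul1r.
  have : 0 <= s 1%N by have := hmono 0%N 1%N isT hk1; rewrite h0.
  lra.
have hD : forall x, (0 < x)%N -> (x <= k)%N -> x%:R * (s x - s x.-1) = s 1%N.
  move=> x hx1 hxk.
  set d := s x - s x.-1.
  have hd0 : 0 <= d by rewrite subr_ge0; apply: hmono => //; exact: leq_pred.
  case: (ltgtP (x%:R * d) (s 1%N)) => [hc|hc|//].
  - have he : 0 < s 1%N - x%:R * d by rewrite subr_gt0.
    have [n hn] := archi_ex (x%:R * d) he.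
    have [_ H2] := hkey x (n.+2) n.+1 hx1 hxk isT.
    exfalso; apply: H2 => //.
    have := hn n.+1 (leqnSn n).
    rewrite natrM !mulrS -/d; lra.
  - have he : 0 < x%:R * d - s 1%N by rewrite subr_gt0.
    have [n hn] := archi_ex (x%:R * d) he.
    have [H1 _] := hkey x n.+1 n.+2 hx1 hxk isT.
    exfalso; apply: H1 => //.
    have := hn n.+2 (leq_trans (leqnSn n) (leqnSn _)).
    rewrite natrM !mulrS -/d; lra.
split => //.
elim => [|j IH] hj; first by rewrite h0 pav0 mulr0.
have := hD j.+1 isT hj; rewrite /= (IH (ltnW hj)) pavS => hE.
have hj0 : (j.+1)%:R != 0 :> R by rewrite pnatr_eq0.
have h2 : s j.+1 - s 1%N * pav_score R j = s 1%N / (j.+1)%:R.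
  by apply/(mulfI hj0); rewrite hE mulrCA mulfV // mulr1.
rewrite mulrDr -h2; ring.
Qed.

Unset Implicit Arguments.

Theorem proposition2 (R : realType) (m k : nat)
    (hm : (2 <= m)%N) (hk1 : (1 <= k)%N) (hk2 : (k <= m - 1)%N) :
  (is_thiele_rule R m k (PAV R m k) /\ party_proportional R m (PAV R m k)) /\
  (forall f : abc_rule m, is_abc_rule m k f -> is_thiele_rule R m k f ->
     party_proportional R m f ->
     forall A : profile m, valid_profile m A -> f A = PAV R m k A).
Proof.
have hkm : (k < m)%N by move: hk2; rewrite leq_subRL ?add1n // ltnW.
split; first split.
- exists (pav_score R); split => //; split; first exact: pav0.
  by move=> x y hxy _; apply: pav_mono.
- exact: pav_pp.
move=> f _ [s [hs hf]] hp A hA.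
have [hs1 hsj] := s_pav hs hf hp hkm hk1.
by rewrite hf // /PAV (thiele_scale A hs1 hsj).
Qed.
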